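(* Let $P,Q\in\Gamma_n$ with $P\ne Q$, and $0<r\le R$ with $r\le p_i/q_i\le R$ for all $i$. Then $$r\le\frac{F(Q\|P)}{F(P\|Q)}\le R\qquad\text{and}\qquad r\le\sqrt{\frac{G(Q\|P)}{G(P\|Q)}}\le R.$$
   Context: $\Gamma_n=\{P=(p_1,\dots,p_n): p_i>0,\ \sum_i p_i=1\}$, $n\ge2$. Relative Jensen–Shannon divergence $F(P\|Q)=\sum_i p_i\ln\frac{2p_i}{p_i+q_i}$, $F(Q\|P)=\sum_i q_i\ln\frac{2q_i}{p_i+q_i}$; relative arithmetic–geometric divergence $G(P\|Q)=\sum_i\frac{p_i+q_i}{2}\ln\frac{p_i+q_i}{2p_i}$, $G(Q\|P)=\sum_i\frac{p_i+q_i}{2}\ln\frac{p_i+q_i}{2q_i}$. *)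

(* Defs.v *)
(* probability vectors are functions nat -> R, indices 0..n-1. *)
From Stdlib Require Import Reals Lra List.
Open Scope R_scope.

Fixpoint sumn (n : nat) (f : nat -> R) : R :=
  match n with
  | O => 0
  | S m => sumn m f + f m
  end.

Definition Gamma (n : nat) (p : nat -> R) : Prop :=
  (forall i, (i < n)%nat -> 0 < p i) /\ sumn n p = 1.

Definition F (n : nat) (p q : nat -> R) : R :=
  sumn n (fun i => p i * ln (2 * p i / (p i + q i))).

Definition G (n : nat) (p q : nat -> R) : R :=
  sumn n (fun i => (p i + q i) / 2 * ln ((p i + q i) / (2 * p i))).

(* Main.v *)
Require Import Defs.
From Stdlib Require Import Reals Lra Lia.
From Coquelicot Require Import Coquelicot.
Open Scope R_scope.
Definition D (H H1 : R -> R) := forall u, 0 < u -> derivable_pt_lim H u (H1 u).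

Lemma mono1 (H1 H2 : R -> R) a b x y : D H1 H2 -> 0 < a -> a <= x -> x <= y -> y <= b ->
  (forall u, a <= u <= b -> 0 <= H2 u) -> H1 x <= H1 y.
Proof.
  intros d ha hx hxy hy h2.
  destruct (Req_dec x y) as [->|ne]; [lra|].
  destruct (MVT_cor2 H1 H2 x y) as [c [e hc]]; [lra| intros c hc; apply d; lra |].
  assert (0 <= H2 c) by (apply h2; lra).
  assert (0 <= H2 c * (y - x)) by (apply Rmult_le_pos; lra). lra.
Qed.

Lemma conv_pos (H H1 H2 : R -> R) (t : R) : 0 < t -> D H H1 -> D H1 H2 ->
  H 1 = 0 -> H1 1 = 0 ->
  (forall u, Rmin t 1 <= u <= Rmax t 1 -> 0 <= H2 u) -> 0 <= H t.
Proof.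
  intros ht d1 d2 e0 e1 h2.
  destruct (Rtotal_order t 1) as [lt|[eq|gt]].
  - rewrite Rmin_left in h2 by lra. rewrite Rmax_right in h2 by lra.
    destruct (MVT_cor2 H H1 t 1) as [c [e hc]]; [lra| intros c hc; apply d1; lra |].
    assert (H1 c <= H1 1) by (apply (mono1 H1 H2 t 1); auto; lra).
    assert (0 <= - H1 c * (1 - t)) by (apply Rmult_le_pos; lra). lra.
  - subst; lra.
  - rewrite Rmin_right in h2 by lra. rewrite Rmax_left in h2 by lra.
    destruct (MVT_cor2 H H1 1 t) as [c [e hc]]; [lra| intros c hc; apply d1; lra |].
    assert (H1 1 <= H1 c) by (apply (mono1 H1 H2 1 t); auto; lra).
    assert (0 <= H1 c * (t - 1)) by (apply Rmult_le_pos; lra). lra.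
Qed.

Lemma mono1s (H1 H2 : R -> R) x y : D H1 H2 -> 0 < x -> x < y ->
  (forall u, 0 < u -> 0 < H2 u) -> H1 x < H1 y.
Proof.
  intros d hx hxy h2.
  destruct (MVT_cor2 H1 H2 x y) as [c [e hc]]; [lra| intros c hc; apply d; lra |].
  assert (0 < H2 c) by (apply h2; lra).
  assert (0 < H2 c * (y - x)) by (apply Rmult_lt_0_compat; lra). lra.
Qed.

Lemma conv_spos (H H1 H2 : R -> R) (t : R) : 0 < t -> t <> 1 -> D H H1 -> D H1 H2 ->
  H 1 = 0 -> H1 1 = 0 -> (forall u, 0 < u -> 0 < H2 u) -> 0 < H t.
Proof.
  intros ht tn d1 d2 e0 e1 h2.
  destruct (Rtotal_order t 1) as [lt|[eq|gt]].
  - destruct (MVT_cor2 H H1 t 1) as [c [e hc]]; [lra| intros c hc; apply d1; lra |].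
    assert (H1 c < H1 1) by (apply (mono1s H1 H2); auto; lra).
    assert (0 < - H1 c * (1 - t)) by (apply Rmult_lt_0_compat; lra). lra.
  - lra.
  - destruct (MVT_cor2 H H1 1 t) as [c [e hc]]; [lra| intros c hc; apply d1; lra |].
    assert (H1 1 < H1 c) by (apply (mono1s H1 H2); auto; lra).
    assert (0 < H1 c * (t - 1)) by (apply Rmult_lt_0_compat; lra). lra.
Qed.

Lemma Dlin (f f1 g g1 : R -> R) c d : D f f1 -> D g g1 ->
  D (fun u => c * f u + d * g u) (fun u => c * f1 u + d * g1 u).
Proof.
  intros hf hg u hu. apply derivable_pt_lim_plus.
  apply derivable_pt_lim_scal; auto. apply derivable_pt_lim_scal; auto.
Qed.

Lemma cmp (f f1 f2 g g1 g2 w : R -> R) t : 0 < t ->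
  D f f1 -> D f1 f2 -> D g g1 -> D g1 g2 ->
  f 1 = 0 -> f1 1 = 0 -> g 1 = 0 -> g1 1 = 0 ->
  (forall u, 0 < u -> 0 < g2 u) -> (forall u, 0 < u -> f2 u = w u * g2 u) ->
  (forall u v, 0 < u -> u <= v -> w u <= w v) -> w 1 = 1 ->
  0 <= g t /\ Rmin 1 (w t) * g t <= f t <= Rmax 1 (w t) * g t.
Proof.
  intros ht df1 df2 dg1 dg2 f0 f10 g0 g10 g2p fw wm w1.
  assert (G0 : 0 <= g t).
  { apply (conv_pos g g1 g2); auto. intros u hu.
    assert (0 < u) by (pose proof (Rmin_glb_lt t 1 0); unfold Rmin in *; destruct (Rle_dec t 1); lra).
    left; auto. }
  split; auto.
  assert (K : forall c d, (forall u, Rmin t 1 <= u <= Rmax t 1 -> 0 <= c * f2 u + d * g2 u) ->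
     0 <= c * f t + d * g t).
  { intros c d h. apply (conv_pos (fun u => c * f u + d * g u) (fun u => c * f1 u + d * g1 u)
       (fun u => c * f2 u + d * g2 u)); auto; try (apply Dlin; auto).
    - rewrite f0, g0; ring. - rewrite f10, g10; ring. }
  destruct (Rle_dec 1 t) as [le|gt].
  - assert (1 <= w t) by (rewrite <- w1; apply wm; lra).
    rewrite Rmin_left, Rmax_right by lra.
    rewrite Rmin_right, Rmax_left in K by lra.
    split.
    + assert (0 <= 1 * f t + (-1) * g t); [|lra].
      apply K. intros u hu. rewrite fw by lra.
      assert (1 <= w u) by (rewrite <- w1; apply wm; lra).
      assert (0 < g2 u) by (apply g2p; lra).
      assert (0 <= (w u - 1) * g2 u) by (apply Rmult_le_pos; lra). lra.
    + assert (0 <= (-1) * f t + w t * g t); [|lra].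
      apply K. intros u hu. rewrite fw by lra.
      assert (w u <= w t) by (apply wm; lra).
      assert (0 < g2 u) by (apply g2p; lra).
      assert (0 <= (w t - w u) * g2 u) by (apply Rmult_le_pos; lra). lra.
  - assert (w t <= 1) by (rewrite <- w1; apply wm; lra).
    rewrite Rmin_right, Rmax_left by lra.
    rewrite Rmin_left, Rmax_right in K by lra.
    split.
    + assert (0 <= 1 * f t + (- w t) * g t); [|lra].
      apply K. intros u hu. rewrite fw by lra.
      assert (w t <= w u) by (apply wm; lra).
      assert (0 < g2 u) by (apply g2p; lra).
      assert (0 <= (w u - w t) * g2 u) by (apply Rmult_le_pos; lra). lra.
    + assert (0 <= (-1) * f t + 1 * g t); [|lra].
      apply K. intros u hu. rewrite fw by lra.
      assert (w u <= 1) by (rewrite <- w1; apply wm; lra).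
      assert (0 < g2 u) by (apply g2p; lra).
      assert (0 <= (1 - w u) * g2 u) by (apply Rmult_le_pos; lra). lra.
Qed.
Definition fa u := ln (2 / (1 + u)) + (u - 1) / 2.
Definition fa1 u := - / (1 + u) + / 2.
Definition fa2 u := / ((1 + u) * (1 + u)).
Definition fb u := u * ln (2 * u / (1 + u)) - (u - 1) / 2.
Definition fb1 u := ln (2 * u / (1 + u)) + / (1 + u) - / 2.
Definition fb2 u := / (u * ((1 + u) * (1 + u))).
Definition fh u := (u + 1) / 2 * ln ((u + 1) / 2) - (u - 1) / 2.
Definition fh1 u := ln ((u + 1) / 2) / 2.
Definition fh2 u := / (2 * (u + 1)).
Definition fk u := (u + 1) / 2 * ln ((u + 1) / (2 * u)) + (u - 1) / 2.
Definition fk1 u := ln ((u + 1) / (2 * u)) / 2 - / (2 * u) + / 2.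
Definition fk2 u := / (2 * (u * u) * (u + 1)).

Ltac pos := repeat (first [apply Rmult_lt_0_compat | apply Rinv_0_lt_compat | apply Rdiv_lt_0_compat]); lra.
Ltac side := repeat match goal with
  | |- _ /\ _ => split | |- True => exact I
  | |- _ <> 0 => apply Rgt_not_eq; unfold Rgt; pos
  | |- 0 < _ => pos end.
Ltac dd := intros u hu; apply is_derive_Reals; auto_derive;
  [side | unfold Rdiv; field; side].

Lemma Da : D fa fa1. Proof. unfold fa, fa1. dd. Qed.
Lemma Da1 : D fa1 fa2. Proof. unfold fa1, fa2. dd. Qed.
Lemma Db : D fb fb1. Proof. unfold fb, fb1. dd. Qed.
Lemma Db1 : D fb1 fb2. Proof. unfold fb1, fb2. dd. Qed.
Lemma Dh : D fh fh1. Proof. unfold fh, fh1. dd. Qed.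
Lemma Dh1 : D fh1 fh2. Proof. unfold fh1, fh2. dd. Qed.
Lemma Dk : D fk fk1. Proof. unfold fk, fk1. dd. Qed.
Lemma Dk1 : D fk1 fk2. Proof. unfold fk1, fk2. dd. Qed.

Lemma sumn_ext n f g : (forall i, (i < n)%nat -> f i = g i) -> sumn n f = sumn n g.
Proof. induction n; simpl; intros h; auto. rewrite IHn by (intros; apply h; lia). rewrite h by lia. auto. Qed.

Lemma sumn_lin n f p q c : sumn n (fun i => f i + c * (p i - q i)) = sumn n f + c * (sumn n p - sumn n q).
Proof. induction n; simpl. ring. rewrite IHn. ring. Qed.

Lemma sumn_scal n f c : sumn n (fun i => c * f i) = c * sumn n f.
Proof. induction n; simpl. ring. rewrite IHn. ring. Qed.

Lemma sumn_le n f g : (forall i, (i < n)%nat -> f i <= g i) -> sumn n f <= sumn n g.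
Proof. induction n; simpl; intros h. lra. assert (f n <= g n) by (apply h; lia).
  assert (sumn n f <= sumn n g) by (apply IHn; intros; apply h; lia). lra. Qed.

Lemma sumn_lt n f g i0 : (i0 < n)%nat -> (forall i, (i < n)%nat -> f i <= g i) -> f i0 < g i0 -> sumn n f < sumn n g.
Proof. induction n; simpl; intros hi h hs. lia.
  assert (f n <= g n) by (apply h; lia).
  destruct (Nat.eq_dec i0 n) as [->|ne].
  - assert (sumn n f <= sumn n g) by (apply sumn_le; intros; apply h; lia). lra.
  - assert (sumn n f < sumn n g) by (apply IHn; [lia| intros; apply h; lia | auto]). lra.
Qed.

Lemma ln22 : ln (2 / (1 + 1)) = 0.
Proof. replace (2 / (1 + 1)) with 1 by field. apply ln_1. Qed.
Lemma ln22' : ln (2 * 1 / (1 + 1)) = 0.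
Proof. replace (2 * 1 / (1 + 1)) with 1 by field. apply ln_1. Qed.
Lemma ln22'' : ln ((1 + 1) / 2) = 0.
Proof. replace ((1 + 1) / 2) with 1 by field. apply ln_1. Qed.
Lemma ln22''' : ln ((1 + 1) / (2 * 1)) = 0.
Proof. replace ((1 + 1) / (2 * 1)) with 1 by field. apply ln_1. Qed.

Lemma cmpF t : 0 < t -> 0 <= fb t /\ Rmin 1 t * fb t <= fa t <= Rmax 1 t * fb t.
Proof.
  intros ht. apply (cmp fa fa1 fa2 fb fb1 fb2 (fun u => u)); auto using Da, Da1, Db, Db1.
  - unfold fa; rewrite ln22; field.
  - unfold fa1; field.
  - unfold fb; rewrite ln22'; field.
  - unfold fb1; rewrite ln22'; field.
  - intros u hu; unfold fb2; pos.
  - intros u hu; unfold fa2, fb2; field; lra.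
Qed.

Lemma cmpG t : 0 < t -> 0 <= fk t /\ Rmin 1 (t*t) * fk t <= fh t <= Rmax 1 (t*t) * fk t.
Proof.
  intros ht. apply (cmp fh fh1 fh2 fk fk1 fk2 (fun u => u*u)); auto using Dh, Dh1, Dk, Dk1.
  - unfold fh; rewrite ln22''; field.
  - unfold fh1; rewrite ln22''; field.
  - unfold fk; rewrite ln22'''; field.
  - unfold fk1; rewrite ln22'''; field.
  - intros u hu; unfold fk2; pos.
  - intros u hu; unfold fh2, fk2; field; lra.
  - intros u v hu huv; nra.
  - ring.
Qed.

Lemma fb_pos t : 0 < t -> t <> 1 -> 0 < fb t.
Proof. intros; apply (conv_spos fb fb1 fb2); auto using Db, Db1.
  - unfold fb; rewrite ln22'; field.
  - unfold fb1; rewrite ln22'; field.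
  - intros u hu; unfold fb2; pos. Qed.

Lemma fk_pos t : 0 < t -> t <> 1 -> 0 < fk t.
Proof. intros; apply (conv_spos fk fk1 fk2); auto using Dk, Dk1.
  - unfold fk; rewrite ln22'''; field.
  - unfold fk1; rewrite ln22'''; field.
  - intros u hu; unfold fk2; pos. Qed.

Lemma ratio A B a b : 0 < B -> a * B <= A <= b * B -> a <= A / B <= b.
Proof. intros hB [h1 h2]. split.
  - apply (Rmult_le_reg_r B); auto. unfold Rdiv; rewrite Rmult_assoc, Rinv_l; lra.
  - apply (Rmult_le_reg_r B); auto. unfold Rdiv; rewrite Rmult_assoc, Rinv_l; lra. Qed.

Theorem mainTheorem17 (n : nat) (p q : nat -> R) (r R0 : R) :
  (2 <= n)%nat ->
  Gamma n p -> Gamma n q ->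
  (exists i, (i < n)%nat /\ p i <> q i) ->
  0 < r -> r <= R0 ->
  (forall i, (i < n)%nat -> r <= p i / q i <= R0) ->
  (r <= F n q p / F n p q <= R0) /\
  (r <= sqrt (G n q p / G n p q) <= R0).
Proof.
  intros hn [pp ps] [qp qs] [i0 [hi0 ne]] hr hrR hb.
  assert (lo : forall i, (i < n)%nat -> r * q i <= p i).
  { intros i hi. specialize (hb i hi). specialize (qp i hi).
    replace (p i) with (p i / q i * q i) by (field; lra). apply Rmult_le_compat_r; lra. }
  assert (up : forall i, (i < n)%nat -> p i <= R0 * q i).
  { intros i hi. specialize (hb i hi). specialize (qp i hi).
    replace (p i) with (p i / q i * q i) by (field; lra). apply Rmult_le_compat_r; lra. }
  assert (r1 : r <= 1).
  { assert (sumn n (fun i => r * q i) <= sumn n p) by (apply sumn_le; auto).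
    rewrite sumn_scal, qs, ps in H. lra. }
  assert (R1 : 1 <= R0).
  { assert (sumn n p <= sumn n (fun i => R0 * q i)) by (apply sumn_le; auto).
    rewrite sumn_scal, qs, ps in H. lra. }
  assert (tpos : forall i, (i < n)%nat -> 0 < p i / q i).
  { intros i hi. apply Rdiv_lt_0_compat; auto. }
  assert (t1 : p i0 / q i0 <> 1).
  { intros e. apply ne. specialize (qp i0 hi0).
    replace (p i0) with (p i0 / q i0 * q i0) by (field; lra). rewrite e; ring. }
  assert (EA : F n q p = sumn n (fun i => q i * fa (p i / q i))).
  { transitivity (sumn n (fun i => q i * ln (2 * q i / (q i + p i)) + /2 * (p i - q i))).
    - rewrite sumn_lin, ps, qs. unfold F. ring.
    - apply sumn_ext. intros i hi. specialize (qp i hi); specialize (pp i hi). unfold fa.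
      replace (2 / (1 + p i / q i)) with (2 * q i / (q i + p i)) by (field; lra). field; lra. }
  assert (EB : F n p q = sumn n (fun i => q i * fb (p i / q i))).
  { transitivity (sumn n (fun i => p i * ln (2 * p i / (p i + q i)) + (-/2) * (p i - q i))).
    - rewrite sumn_lin, ps, qs. unfold F. ring.
    - apply sumn_ext. intros i hi. specialize (qp i hi); specialize (pp i hi). unfold fb.
      replace (2 * (p i / q i) / (1 + p i / q i)) with (2 * p i / (p i + q i)) by (field; lra). field; lra. }
  assert (EH : G n q p = sumn n (fun i => q i * fh (p i / q i))).
  { transitivity (sumn n (fun i => (q i + p i) / 2 * ln ((q i + p i) / (2 * q i)) + (-/2) * (p i - q i))).
    - rewrite sumn_lin, ps, qs. unfold G. ring.
    - apply sumn_ext. intros i hi. specialize (qp i hi); specialize (pp i hi). unfold fh.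
      replace ((p i / q i + 1) / 2) with ((q i + p i) / (2 * q i)) by (field; lra). field; lra. }
  assert (EK : G n p q = sumn n (fun i => q i * fk (p i / q i))).
  { transitivity (sumn n (fun i => (p i + q i) / 2 * ln ((p i + q i) / (2 * p i)) + (/2) * (p i - q i))).
    - rewrite sumn_lin, ps, qs. unfold G. ring.
    - apply sumn_ext. intros i hi. specialize (qp i hi); specialize (pp i hi). unfold fk.
      replace ((p i / q i + 1) / (2 * (p i / q i))) with ((p i + q i) / (2 * p i)) by (field; lra). field; lra. }
  split.
  - rewrite EA, EB. apply ratio.
    + apply Rle_lt_trans with (sumn n (fun _ => 0)).
      { clear. induction n; simpl; lra. }
      apply (sumn_lt _ _ _ i0); auto.
      * intros i hi. destruct (cmpF _ (tpos i hi)). specialize (qp i hi). nra.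
      * pose proof (fb_pos _ (tpos i0 hi0) t1). specialize (qp i0 hi0). nra.
    + rewrite <- !sumn_scal. split; apply sumn_le; intros i hi;
      destruct (cmpF _ (tpos i hi)) as [h0 [h1 h2]]; specialize (qp i hi); specialize (hb i hi).
      * assert (r <= Rmin 1 (p i / q i)) by (apply Rmin_glb; lra).
        assert (r * fb (p i / q i) <= fa (p i / q i)) by nra. nra.
      * assert (Rmax 1 (p i / q i) <= R0) by (apply Rmax_lub; lra).
        assert (fa (p i / q i) <= R0 * fb (p i / q i)) by nra. nra.
  - rewrite EH, EK.
    assert (hh : r * r <= sumn n (fun i => q i * fh (p i / q i)) / sumn n (fun i => q i * fk (p i / q i)) <= R0 * R0).
    { apply ratio.
    + apply Rle_lt_trans with (sumn n (fun _ => 0)).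
      { clear. induction n; simpl; lra. }
      apply (sumn_lt _ _ _ i0); auto.
      * intros i hi. destruct (cmpG _ (tpos i hi)). specialize (qp i hi). nra.
      * pose proof (fk_pos _ (tpos i0 hi0) t1). specialize (qp i0 hi0). nra.
    + rewrite <- !sumn_scal. split; apply sumn_le; intros i hi;
      destruct (cmpG _ (tpos i hi)) as [h0 [h1 h2]]; specialize (qp i hi); specialize (hb i hi).
      * assert (r * r <= Rmin 1 (p i / q i * (p i / q i))) by (apply Rmin_glb; nra).
        assert (r * r * fk (p i / q i) <= fh (p i / q i)) by nra. nra.
      * assert (Rmax 1 (p i / q i * (p i / q i)) <= R0 * R0) by (apply Rmax_lub; nra).
        assert (fh (p i / q i) <= R0 * R0 * fk (p i / q i)) by nra. nra. }
    destruct hh as [h1 h2]. split.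
    + rewrite <- (sqrt_square r) by lra. apply sqrt_le_1_alt; auto.
    + rewrite <- (sqrt_square R0) by lra. apply sqrt_le_1_alt; auto.
Qed.
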